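(* There exists no fixed point combinator $Y$ such that $Y(\lambda z.\, f z z) =_\beta Y(\lambda x.\, Y(\lambda y.\, f x y))$, where $f$ is a variable.
   Context: Untyped $\lambda$-calculus modulo $\alpha$. A fixed point combinator is a $\lambda$-term $Y$ (not necessarily closed) with $Yx =_\beta x(Yx)$ for a variable $x$ not free in $Y$. *)

(* Defs.v *)
From Stdlib Require Import Arith Relations.

Inductive term : Type :=
| Var : nat -> term
| App : term -> term -> term
| Lam : term -> term.

Fixpoint lift (d c : nat) (t : term) : term :=
  match t with
  | Var n => if Nat.ltb n c then Var n else Var (n + d)
  | App t1 t2 => App (lift d c t1) (lift d c t2)
  | Lam t1 => Lam (lift d (S c) t1)
  end.

Fixpoint subst (k : nat) (u : term) (t : term) : term :=
  match t with
  | Var n =>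
      if Nat.ltb n k then Var n
      else if Nat.eqb n k then lift k 0 u
      else Var (pred n)
  | App t1 t2 => App (subst k u t1) (subst k u t2)
  | Lam t1 => Lam (subst (S k) u t1)
  end.

Inductive beta : term -> term -> Prop :=
| beta_redex : forall t u, beta (App (Lam t) u) (subst 0 u t)
| beta_appl : forall t t' u, beta t t' -> beta (App t u) (App t' u)
| beta_appr : forall t u u', beta u u' -> beta (App t u) (App t u')
| beta_lam : forall t t', beta t t' -> beta (Lam t) (Lam t').

Definition beta_eq : term -> term -> Prop := clos_refl_sym_trans term beta.

Fixpoint free (n : nat) (t : term) : Prop :=
  match t with
  | Var m => m = n
  | App t1 t2 => free n t1 \/ free n t2
  | Lam t1 => free (S n) t1
  end.

Definition fpc (Y : term) : Prop :=
  exists x : nat, ~ free x Y /\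
    beta_eq (App Y (Var x)) (App (Var x) (App Y (Var x))).

(* lambda z. f z z *)
Definition diag_fun (f : nat) : term :=
  Lam (App (App (Var (S f)) (Var 0)) (Var 0)).

(* lambda x. Y (lambda y. f x y) *)
Definition nested_fix (Y : term) (f : nat) : term :=
  Lam (App (lift 1 0 Y) (Lam (App (App (Var (S (S f))) (Var 1)) (Var 0)))).

(* Main.v *)
Require Import Defs.
From Stdlib Require Import Arith Lia Relations.


Ltac dest := repeat match goal with
 | |- context [Nat.ltb ?a ?b] => destruct (Nat.ltb_spec a b)
 | |- context [Nat.eqb ?a ?b] => destruct (Nat.eqb_spec a b)
 end.

Fixpoint psub (s : nat -> term) (k : nat) (t : term) : term :=
  match t with
  | Var n => if Nat.ltb n k then Var n else lift k 0 (s (n - k))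
  | App a b => App (psub s k a) (psub s k b)
  | Lam a => Lam (psub s (S k) a)
  end.

Lemma lift_0 : forall t c, lift 0 c t = t.
Proof. induction t; intros c; simpl; dest; try f_equal; auto; lia. Qed.

Lemma lift_lift : forall t i j c c', c <= c' -> c' <= c + j ->
  lift i c' (lift j c t) = lift (i + j) c t.
Proof.
  induction t; intros i j c c' H1 H2; simpl.
  - dest; simpl; dest; f_equal; lia.
  - f_equal; auto.
  - f_equal; apply IHt; lia.
Qed.

Lemma subst_lift : forall t u k m c, c <= k -> k <= c + m ->
  subst k u (lift (S m) c t) = lift m c t.
Proof.
  induction t; intros u k m c H1 H2; simpl.
  - dest; simpl; dest; f_equal; lia.
  - f_equal; auto.
  - f_equal; apply IHt; lia.
Qed.

Lemma psub_lift : forall u s j c k, c <= k ->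
  psub s (j + k) (lift j c u) = lift j c (psub s k u).
Proof.
  induction u; intros s j c k H; simpl.
  - dest; simpl; dest; try (f_equal; lia).
    all: rewrite lift_lift by lia; replace (n + j - (j + k)) with (n - k) by lia; f_equal; lia.
  - f_equal; auto.
  - f_equal. replace (S (j + k)) with (j + S k) by lia. apply IHu; lia.
Qed.

Lemma psub_subst : forall b s u j k,
  psub s (j + k) (subst j u b) = subst j (psub s k u) (psub s (S (j + k)) b).
Proof.
  induction b; intros s u j k; simpl.
  - dest; simpl; dest; try (f_equal; lia).
    + subst. replace (j + k) with (j + k) by lia.
      rewrite <- (psub_lift u s j 0 k) by lia. reflexivity.
    + rewrite subst_lift by lia. f_equal; f_equal; lia.
  - f_equal; auto.
  - f_equal. replace (S (j + k)) with (S j + k) by lia. apply IHb.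
Qed.

Lemma lift_psub : forall t m c, lift m c t = psub (fun n => Var (n + m)) c t.
Proof.
  induction t; intros m c; simpl.
  - dest; simpl; dest; f_equal; lia.
  - f_equal; auto.
  - f_equal; auto.
Qed.

Definition ssig (u : term) (n : nat) : term :=
  match n with 0 => u | S n' => Var n' end.

Lemma subst_psub : forall t u k, subst k u t = psub (ssig u) k t.
Proof.
  induction t; intros u k; simpl.
  - dest; simpl; try (f_equal; lia).
    + subst. replace (k - k) with 0 by lia. reflexivity.
    + destruct (n - k) eqn:E; [lia|]. simpl. dest; f_equal; lia.
  - f_equal; auto.
  - f_equal; auto.
Qed.

Lemma beta_psub : forall t t', beta t t' -> forall s k, beta (psub s k t) (psub s k t').
Proof.
  induction 1; intros s k; simpl; try (constructor; auto; fail).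
  pose proof (psub_subst t s u 0 k) as E. simpl in E. rewrite E. constructor.
Qed.


Definition red := clos_refl_trans term beta.

Lemma beq_refl t : beta_eq t t. Proof. apply rst_refl. Qed.
Lemma beq_sym t u : beta_eq t u -> beta_eq u t. Proof. apply rst_sym. Qed.
Lemma beq_trans t u v : beta_eq t u -> beta_eq u v -> beta_eq t v. Proof. apply rst_trans. Qed.
Lemma beq_step t u : beta t u -> beta_eq t u. Proof. apply rst_step. Qed.
Lemma red_beq t u : red t u -> beta_eq t u.
Proof. induction 1; [apply beq_step|apply beq_refl|eapply beq_trans]; eauto. Qed.

Lemma red_appl t t' u : red t t' -> red (App t u) (App t' u).
Proof. induction 1; [apply rt_step; constructor|apply rt_refl|eapply rt_trans]; eauto. Qed.
Lemma red_appr t u u' : red u u' -> red (App t u) (App t u').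
Proof. induction 1; [apply rt_step; constructor|apply rt_refl|eapply rt_trans]; eauto. Qed.
Lemma red_lam t t' : red t t' -> red (Lam t) (Lam t').
Proof. induction 1; [apply rt_step; constructor|apply rt_refl|eapply rt_trans]; eauto. Qed.

Lemma beq_appl t t' u : beta_eq t t' -> beta_eq (App t u) (App t' u).
Proof. induction 1; [apply beq_step; constructor|apply beq_refl|apply beq_sym|eapply beq_trans]; eauto. Qed.
Lemma beq_appr t u u' : beta_eq u u' -> beta_eq (App t u) (App t u').
Proof. induction 1; [apply beq_step; constructor|apply beq_refl|apply beq_sym|eapply beq_trans]; eauto. Qed.
Lemma beq_lam t t' : beta_eq t t' -> beta_eq (Lam t) (Lam t').
Proof. induction 1; [apply beq_step; constructor|apply beq_refl|apply beq_sym|eapply beq_trans]; eauto. Qed.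
Lemma beq_psub s k t t' : beta_eq t t' -> beta_eq (psub s k t) (psub s k t').
Proof. induction 1; [apply beq_step; apply beta_psub|apply beq_refl|apply beq_sym|eapply beq_trans]; eauto. Qed.
Lemma beq_lift m c t t' : beta_eq t t' -> beta_eq (lift m c t) (lift m c t').
Proof. intros H. rewrite !lift_psub. apply beq_psub; auto. Qed.
Lemma beq_subst k u t t' : beta_eq t t' -> beta_eq (subst k u t) (subst k u t').
Proof. intros H. rewrite !subst_psub. apply beq_psub; auto. Qed.

Inductive par : term -> term -> Prop :=
| par_var n : par (Var n) (Var n)
| par_app t t' u u' : par t t' -> par u u' -> par (App t u) (App t' u')
| par_lam t t' : par t t' -> par (Lam t) (Lam t')
| par_beta t t' u u' : par t t' -> par u u' -> par (App (Lam t) u) (subst 0 u' t').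

Lemma par_refl t : par t t.
Proof. induction t; constructor; auto. Qed.

Lemma par_lift : forall t t', par t t' -> forall m c, par (lift m c t) (lift m c t').
Proof.
  induction 1; intros m c; simpl; try (constructor; auto; fail).
  apply par_refl.
  rewrite !lift_psub.
  pose proof (psub_subst t' (fun n => Var (n + m)) u' 0 c) as E. simpl in E. rewrite E.
  rewrite <- !lift_psub. constructor; auto.
Qed.

Lemma par_psub : forall t t', par t t' -> forall s s' k, (forall n, par (s n) (s' n)) ->
  par (psub s k t) (psub s' k t').
Proof.
  induction 1; intros s s' k Hs; simpl.
  - destruct (Nat.ltb n k); [constructor|apply par_lift; auto].
  - constructor; auto.
  - constructor; auto.
  - pose proof (psub_subst t' s' u' 0 k) as E. simpl in E. rewrite E.
    constructor; auto.
Qed.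

Lemma par_subst t t' u u' k : par t t' -> par u u' -> par (subst k u t) (subst k u' t').
Proof.
  intros H1 H2. rewrite !subst_psub. apply par_psub; auto.
  intros [|n]; simpl; auto. constructor.
Qed.

Lemma par_lam_inv t u : par (Lam t) u -> exists t', u = Lam t' /\ par t t'.
Proof. intros H; inversion H; subst; eauto. Qed.

Lemma par_diamond : forall t t1, par t t1 -> forall t2, par t t2 ->
  exists t3, par t1 t3 /\ par t2 t3.
Proof.
  induction 1; intros t2 H2.
  - inversion H2; subst. exists (Var n); split; constructor.
  - inversion H2; subst.
    + destruct (IHpar1 _ H4) as [a [? ?]]. destruct (IHpar2 _ H6) as [b [? ?]].
      exists (App a b); split; constructor; auto.
    + destruct (par_lam_inv _ _ H) as [t0' [-> Ht0]].
      destruct (IHpar1 (Lam t'0)) as [a [Ha1 Ha2]]. constructor; auto.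
      destruct (par_lam_inv _ _ Ha2) as [a' [-> Ha']].
      inversion Ha1; subst.
      destruct (IHpar2 _ H6) as [b [? ?]].
      exists (subst 0 b a'); split.
      * constructor; auto.
      * apply par_subst; auto.
  - inversion H2; subst. destruct (IHpar _ H1) as [a [? ?]].
    exists (Lam a); split; constructor; auto.
  - inversion H2; subst.
    + destruct (par_lam_inv _ _ H4) as [b2 [-> Hb2]].
      destruct (IHpar1 _ Hb2) as [a [? ?]]. destruct (IHpar2 _ H6) as [b [? ?]].
      exists (subst 0 b a); split.
      * apply par_subst; auto.
      * constructor; auto.
    + match goal with Hx : par t t'0 |- _ => destruct (IHpar1 _ Hx) as [a [? ?]] end.
      match goal with Hx : par u u'0 |- _ => destruct (IHpar2 _ Hx) as [b [? ?]] end.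
      exists (subst 0 b a); split; apply par_subst; auto.
Qed.

Definition pars := clos_refl_trans term par.

Lemma strip : forall t t2, pars t t2 -> forall t1, par t t1 ->
  exists t3, pars t1 t3 /\ par t2 t3.
Proof.
  intros t t2 H. apply clos_rt_rt1n in H. induction H; intros t1 H1.
  - exists t1; split; [apply rt_refl|auto].
  - destruct (par_diamond _ _ H1 _ H) as [a [Ha1 Ha2]].
    destruct (IHclos_refl_trans_1n _ Ha2) as [b [Hb1 Hb2]].
    exists b; split; auto. eapply rt_trans; [apply rt_step; eauto|auto].
Qed.

Lemma pars_confl : forall t t1, pars t t1 -> forall t2, pars t t2 ->
  exists t3, pars t1 t3 /\ pars t2 t3.
Proof.
  intros t t1 H. apply clos_rt_rt1n in H. induction H; intros t2 H2.
  - exists t2; split; [auto|apply rt_refl].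
  - destruct (strip _ _ H2 _ H) as [a [Ha1 Ha2]].
    destruct (IHclos_refl_trans_1n _ Ha1) as [b [Hb1 Hb2]].
    exists b; split; auto. eapply rt_trans; [apply rt_step; eauto|auto].
Qed.

Lemma par_red : forall t t', par t t' -> red t t'.
Proof.
  induction 1.
  - apply rt_refl.
  - eapply rt_trans; [apply red_appl; eauto|apply red_appr; eauto].
  - apply red_lam; auto.
  - eapply rt_trans; [apply red_appl, red_lam; eauto|].
    eapply rt_trans; [apply red_appr; eauto|]. apply rt_step; constructor.
Qed.

Lemma beta_par t t' : beta t t' -> par t t'.
Proof. induction 1; constructor; auto using par_refl. Qed.

Lemma pars_red t t' : pars t t' -> red t t'.
Proof. induction 1; [apply par_red|apply rt_refl|eapply rt_trans]; eauto. Qed.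
Lemma red_pars t t' : red t t' -> pars t t'.
Proof. induction 1; [apply rt_step, beta_par|apply rt_refl|eapply rt_trans]; eauto. Qed.

Lemma red_confl t t1 t2 : red t t1 -> red t t2 -> exists t3, red t1 t3 /\ red t2 t3.
Proof.
  intros H1 H2. destruct (pars_confl _ _ (red_pars _ _ H1) _ (red_pars _ _ H2)) as [a [? ?]].
  exists a; split; apply pars_red; auto.
Qed.

Lemma CR t u : beta_eq t u -> exists w, red t w /\ red u w.
Proof.
  induction 1.
  - exists y; split; [apply rt_step; auto|apply rt_refl].
  - exists x; split; apply rt_refl.
  - destruct IHclos_refl_sym_trans as [w [? ?]]; eauto.
  - destruct IHclos_refl_sym_trans1 as [w1 [? ?]].
    destruct IHclos_refl_sym_trans2 as [w2 [? ?]].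
    destruct (red_confl _ _ _ H2 H3) as [w [? ?]].
    exists w; split; eapply rt_trans; eauto.
Qed.

Lemma red_var n t : red (Var n) t -> t = Var n.
Proof.
  intros H. apply clos_rt_rt1n in H. remember (Var n) as v eqn:E.
  induction H; auto. subst. inversion H.
Qed.

Lemma var_beq n m : beta_eq (Var n) (Var m) -> n = m.
Proof.
  intros H. destruct (CR _ _ H) as [w [H1 H2]].
  apply red_var in H1; apply red_var in H2. congruence.
Qed.


Lemma psub_id : forall t k s, (forall n, free (n + k) t -> s n = Var n) -> psub s k t = t.
Proof.
  induction t; intros k s H; simpl.
  - destruct (Nat.ltb_spec n k); auto.
    rewrite H by (simpl; lia). simpl. destruct (Nat.ltb_spec (n - k) 0); f_equal; lia.
  - f_equal; [apply IHt1|apply IHt2]; intros m Hm; apply H; simpl; auto.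
  - f_equal. apply IHt. intros m Hm. apply H. simpl. rewrite <- Nat.add_succ_r. auto.
Qed.

Lemma fresh : forall t, exists N, forall n, N <= n -> ~ free n t.
Proof.
  induction t.
  - exists (S n). intros m Hm; simpl; lia.
  - destruct IHt1 as [N1 H1]; destruct IHt2 as [N2 H2]. exists (N1 + N2).
    intros n Hn [H|H]; [apply (H1 n)|apply (H2 n)]; auto; lia.
  - destruct IHt as [N H]. exists N. intros n Hn Hf. apply (H (S n)); auto.
Qed.

Lemma fpc_gen Y : fpc Y -> forall H, beta_eq (App Y H) (App H (App Y H)).
Proof.
  intros [x [Hx Heq]] H.
  set (s := fun n => if Nat.eqb n x then H else Var n).
  apply (beq_psub s 0) in Heq. simpl in Heq.
  assert (E : psub s 0 Y = Y).
  { apply psub_id. intros n Hn. unfold s. destruct (Nat.eqb_spec n x); auto.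
    subst. rewrite Nat.add_0_r in Hn. contradiction. }
  rewrite E in Heq. rewrite Nat.sub_0_r in Heq. unfold s in Heq.
  rewrite Nat.eqb_refl in Heq. rewrite lift_0 in Heq. exact Heq.
Qed.



Inductive TW (f : nat) : nat -> term -> Prop :=
| tw_var d n : n <> d + f -> TW f d (Var n)
| tw_lam d t : TW f (S d) t -> TW f d (Lam t)
| tw_app d t u : TW f d t -> TW f d u -> TW f d (App t u)
| tw_f d m a1 a2 : m = d + f -> beta_eq a1 a2 -> TW f d a1 -> TW f d a2 ->
    TW f d (App (App (Var m) a1) a2).

Lemma tw_nofree f : forall t d, ~ free (d + f) t -> TW f d t.
Proof.
  induction t; intros d H; simpl in H.
  - constructor; auto.
  - constructor; [apply IHt1|apply IHt2]; tauto.
  - constructor. apply IHt. auto.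
Qed.

Lemma tw_lift f : forall d t, TW f d t -> forall c m, c <= d -> TW f (m + d) (lift m c t).
Proof.
  induction 1; intros c mm Hc; simpl.
  - dest; constructor; lia.
  - constructor. rewrite <- Nat.add_succ_r. apply IHTW. lia.
  - constructor; auto.
  - subst m. dest; [lia|]. apply tw_f; auto; [lia|]. apply beq_lift; auto.
Qed.

Lemma tw_subst f : forall d0 b, TW f d0 b -> forall k d u, d0 = k + S d -> TW f d u ->
  TW f (k + d) (subst k u b).
Proof.
  induction 1; intros k dd w Hd Hu; subst; simpl.
  - dest.
    + constructor; lia.
    + apply (tw_lift f dd w Hu 0 k). lia.
    + constructor; lia.
  - constructor. apply (IHTW (S k) dd w); auto.
  - constructor; eauto.
  - dest; try lia. apply tw_f; eauto; [lia|]. apply beq_subst; auto.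
Qed.

Lemma beta_appvar_inv m a t : beta (App (Var m) a) t -> exists a', t = App (Var m) a' /\ beta a a'.
Proof. intros H; inversion H; subst; eauto. inversion H3. Qed.

Fixpoint size (t : term) : nat :=
  match t with Var _ => 1 | App a b => S (size a + size b) | Lam a => S (size a) end.

Lemma tw_beta_aux f : forall N t, size t < N -> forall d t', TW f d t -> beta t t' -> TW f d t'.
Proof.
  induction N; intros t Hs d t' Ht Hb; [lia|].
  destruct t as [n|t1 t2|t1].
  - inversion Hb.
  - inversion Hb; subst.
    +
      inversion Ht; subst. inversion H2; subst.
      apply (tw_subst f (S d) t H1 0 d t2); auto.
    + inversion Ht; subst.
      * constructor; auto. apply (IHN t1); simpl in Hs; auto; lia.
      * destruct (beta_appvar_inv _ _ _ H2) as [a' [-> Ha]].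
        apply tw_f; auto.
        -- eapply beq_trans; [apply beq_sym, beq_step; eauto|auto].
        -- apply (IHN a1); simpl in Hs; auto; lia.
    + inversion Ht; subst.
      * constructor; auto. apply (IHN t2); simpl in Hs; auto; lia.
      * apply tw_f; auto.
        -- eapply beq_trans; [eauto|apply beq_step; auto].
        -- apply (IHN t2); simpl in Hs; auto; lia.
  - inversion Hb; subst. inversion Ht; subst. constructor.
    apply (IHN t1); simpl in Hs; auto; lia.
Qed.

Lemma tw_red f d t t' : red t t' -> TW f d t -> TW f d t'.
Proof.
  induction 1; auto. intros; eapply tw_beta_aux; eauto.
Qed.



Section SRsec.
Variables (x f : nat) (A : term).

Inductive SR : nat -> term -> term -> Prop :=
| s_var d n : n <> d + x -> n <> d + f -> SR d (Var n) (Var n)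
| s_lam d t t' : SR (S d) t t' -> SR d (Lam t) (Lam t')
| s_app d t1 t1' t2 t2' : SR d t1 t1' -> SR d t2 t2' -> SR d (App t1 t2) (App t1' t2')
| s_G d n m b : n = d + x -> m = S (d + f) -> beta_eq b (lift (S d) 0 A) ->
    SR d (Var n) (Lam (App (App (Var m) b) (Var 0)))
| s_Gc d n m a u u' : n = d + x -> m = d + f -> beta_eq a (lift d 0 A) -> SR d u u' ->
    SR d (App (Var n) u) (App (App (Var m) a) u').

Lemma sr_nofree : forall t d, ~ free (d + x) t -> ~ free (d + f) t -> SR d t t.
Proof.
  induction t; intros d H1 H2; simpl in *.
  - constructor; auto.
  - constructor; [apply IHt1|apply IHt2]; tauto.
  - constructor. apply IHt; auto.
Qed.

Lemma sr_lift : forall d t t', SR d t t' -> forall c m, c <= d ->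
  SR (m + d) (lift m c t) (lift m c t').
Proof.
  induction 1; intros c mm Hc; simpl.
  - dest; constructor; lia.
  - constructor. rewrite <- Nat.add_succ_r. apply IHSR. lia.
  - constructor; auto.
  - subst. dest; try lia. simpl. apply s_G; try lia.
    eapply beq_trans; [apply beq_lift; eauto|].
    rewrite lift_lift by lia. rewrite Nat.add_succ_r. apply beq_refl.
  - subst. dest; try lia. apply s_Gc; try lia; auto.
    eapply beq_trans; [apply beq_lift; eauto|].
    rewrite lift_lift by lia. apply beq_refl.
Qed.

Lemma sr_subst : forall d0 t b, SR d0 t b -> forall k d q u, d0 = k + S d -> SR d q u ->
  SR (k + d) (subst k q t) (subst k u b).
Proof.
  induction 1; intros k dd q w Hd Hq; subst; simpl.
  - dest; try (constructor; lia).
    apply (sr_lift dd q w Hq 0 k). lia.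
  - constructor. apply (IHSR (S k) dd q w); auto.
  - constructor; eauto.
  - dest; try lia. simpl. apply s_G; try lia.
    eapply beq_trans; [apply beq_subst; eauto|].
    replace (S (k + S dd)) with (S (S (k + dd))) by lia.
    rewrite subst_lift by lia. apply beq_refl.
  - dest; try lia. apply s_Gc; try lia; eauto.
    eapply beq_trans; [apply beq_subst; eauto|].
    replace (k + S dd) with (S (k + dd)) by lia.
    rewrite subst_lift by lia. apply beq_refl.
Qed.

Lemma sr_beta : forall P P', beta P P' -> forall d Q, SR d Q P -> exists Q', SR d Q' P'.
Proof.
  induction 1; intros d Q HS.
  - inversion HS; subst.
    match goal with H : SR _ _ (Lam _) |- _ => inversion H; subst end.
    + exists (subst 0 t2 t0). apply (sr_subst (S d) t0 t H2 0 d t2 u); auto.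
    + simpl. eexists. rewrite lift_0. apply s_Gc; eauto.
      eapply beq_trans; [apply beq_subst; eauto|].
      rewrite subst_lift by lia. apply beq_refl.
  - inversion HS; subst.
    + match goal with H : SR _ _ t |- _ => destruct (IHbeta _ _ H) as [Q1 HQ1] end.
      exists (App Q1 t2). constructor; auto.
    + destruct (beta_appvar_inv _ _ _ H) as [a' [-> Ha]].
      eexists. apply s_Gc; eauto.
      eapply beq_trans; [apply beq_sym, beq_step; eauto|auto].
  - inversion HS; subst.
    + match goal with H : SR _ _ u |- _ => destruct (IHbeta _ _ H) as [Q1 HQ1] end.
      exists (App t1 Q1). constructor; auto.
    + match goal with H : SR _ _ u |- _ => destruct (IHbeta _ _ H) as [Q1 HQ1] end.
      eexists. apply s_Gc; eauto.
  - inversion HS; subst.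
    + match goal with H : SR _ _ t |- _ => destruct (IHbeta _ _ H) as [Q1 HQ1] end.
      exists (Lam Q1). constructor; auto.
    + eexists. inversion H; subst.
      * match goal with Hb : beta (App (Var _) _) _ |- _ =>
          destruct (beta_appvar_inv _ _ _ Hb) as [a' [-> Ha]] end.
        apply s_G; eauto. eapply beq_trans; [apply beq_sym, beq_step; eauto|auto].
      * match goal with Hb : beta (Var _) _ |- _ => inversion Hb end.
Qed.

Lemma sr_red d Q P P' : red P P' -> SR d Q P -> exists Q', SR d Q' P'.
Proof.
  intros H. revert Q. induction H; intros Q HS.
  - eapply sr_beta; eauto.
  - eauto.
  - destruct (IHclos_refl_trans1 _ HS) as [Q1 H1]. eauto.
Qed.

Hypothesis C2 : forall d v, ~ free (d + f) v -> beta_eq v (lift d 0 A) -> False.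

Lemma L0 : forall d u u', SR d u u' -> TW f d u' -> ~ free (d + f) u'.
Proof.
  induction 1; intros HT; simpl.
  - lia.
  - inversion HT; subst. apply IHSR; auto.
  - inversion HT; subst.
    + intros [?|?]; [apply IHSR1|apply IHSR2]; auto.
    + exfalso. match goal with Hs : SR _ _ (App (Var _) _) |- _ => inversion Hs; subst end.
      match goal with Hs : SR _ _ (Var _) |- _ => inversion Hs; subst end. lia.
  - exfalso. subst. inversion HT; subst.
    match goal with Ht : TW _ _ (App _ (Var 0)) |- _ => inversion Ht; subst end.
    + match goal with Ht : TW _ _ (App (Var _) _) |- _ => inversion Ht; subst end.
      match goal with Ht : TW _ _ (Var _) |- _ => inversion Ht; subst end. lia.
    + apply (C2 (S d) (Var 0)); simpl; [lia|].
      eapply beq_trans; [apply beq_sym; eauto|auto].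
  - exfalso. subst. inversion HT; subst.
    + match goal with Ht : TW _ _ (App (Var _) _) |- _ => inversion Ht; subst end.
      match goal with Ht : TW _ _ (Var _) |- _ => inversion Ht; subst end. lia.
    + apply (C2 d u'); [apply IHSR; auto|].
      eapply beq_trans; [apply beq_sym; eauto|auto].
Qed.

End SRsec.


Section Main.
Variables (Y : term) (f : nat).
Hypothesis Hnf : ~ free f Y.
Hypothesis FP : forall H, beta_eq (App Y H) (App H (App Y H)).

Definition sg (c : nat) (n : nat) : term :=
  if Nat.eqb n f then Lam (Lam (Var (2 + c))) else Var n.

Lemma psubY c : psub (sg c) 0 Y = Y.
Proof.
  apply psub_id. intros n Hn. unfold sg. destruct (Nat.eqb_spec n f); auto.
  subst. rewrite Nat.add_0_r in Hn. contradiction.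
Qed.

Lemma keyA c : beta_eq (psub (sg c) 0 (App Y (diag_fun f))) (Var c).
Proof.
  simpl. rewrite psubY. unfold diag_fun. simpl.
  replace (f - 0) with f by lia. unfold sg. rewrite Nat.eqb_refl. simpl.
  eapply beq_trans.
  { apply beq_appr, beq_lam. eapply beq_trans.
    - apply beq_appl, beq_step, beta_redex.
    - simpl. apply beq_step, beta_redex. }
  simpl. replace (c + 1) with (S c) by lia.
  eapply beq_trans; [apply FP|]. eapply beq_trans; [apply beq_step, beta_redex|].
  simpl. apply beq_refl.
Qed.

Lemma C2 : forall d v, ~ free (d + f) v -> beta_eq v (lift d 0 (App Y (diag_fun f))) -> False.
Proof.
  intros d v Hv He.
  assert (Hc : forall c, beta_eq v (Var (c + d))).
  { intros c. apply (beq_psub (sg c) d) in He.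
    rewrite psub_id in He.
    2:{ intros n Hn. unfold sg. destruct (Nat.eqb_spec n f); auto. subst.
        rewrite Nat.add_comm in Hn. contradiction. }
    pose proof (psub_lift (App Y (diag_fun f)) (sg c) d 0 0 (le_n 0)) as E.
    rewrite Nat.add_0_r in E. rewrite E in He.
    eapply beq_trans; [exact He|]. pose proof (beq_lift d 0 _ _ (keyA c)) as K.
    simpl in K. exact K. }
  pose proof (beq_trans _ _ _ (beq_sym _ _ (Hc 0)) (Hc 1)) as H.
  apply var_beq in H. lia.
Qed.

End Main.

Theorem proposition5p6 :
  ~ exists (Y : term) (f : nat),
      fpc Y /\ ~ free f Y /\
      beta_eq (App Y (diag_fun f)) (App Y (nested_fix Y f)).
Proof.
  intros [Y [f [Hfpc [Hnf Heq]]]].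
  pose proof (fpc_gen Y Hfpc) as FP.
  set (A := App Y (diag_fun f)) in *.
  set (B := App Y (nested_fix Y f)) in *.
  assert (HB : beta_eq B (App Y (Lam (App (App (Var (S f)) (lift 1 0 B)) (Var 0))))).
  { eapply beq_trans; [apply FP|].
    change (nested_fix Y f) with
      (Lam (App (lift 1 0 Y) (Lam (App (App (Var (S (S f))) (Var 1)) (Var 0))))) at 1.
    eapply beq_trans; [apply beq_step, beta_redex|]. cbn [subst Nat.ltb Nat.leb Nat.eqb pred].
    rewrite (subst_lift Y _ 0 0 0) by lia. rewrite lift_0. apply beq_refl. }
  set (C := App Y (Lam (App (App (Var (S f)) (lift 1 0 A)) (Var 0)))).
  assert (HAC : beta_eq A C).
  { eapply beq_trans; [exact Heq|]. eapply beq_trans; [exact HB|].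
    apply beq_appr, beq_lam, beq_appl, beq_appr, beq_lift, beq_sym; exact Heq. }
  destruct (CR _ _ HAC) as [P [HAP HCP]].
  assert (TWA : TW f 0 A).
  { constructor. apply tw_nofree; simpl; auto.
    unfold diag_fun. constructor. apply tw_f; [lia|apply beq_refl|constructor; lia|constructor; lia]. }
  pose proof (tw_red f 0 _ _ HAP TWA) as TWP.
  destruct (fresh Y) as [N HN].
  set (x := N + S f).
  assert (HS : SR x f A 0 (App Y (Var x)) C).
  { constructor.
    - apply sr_nofree; simpl; [apply HN; unfold x; lia|auto].
    - apply s_G; auto. apply beq_refl. }
  destruct (sr_red x f A 0 _ _ _ HCP HS) as [Q HQ].
  pose proof (L0 x f A (C2 Y f Hnf FP) 0 Q P HQ TWP) as HfP.
  apply (C2 Y f Hnf FP 0 P HfP).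
  rewrite lift_0. apply beq_sym, red_beq. exact HAP.
Qed.
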